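(* Let $U,V\in\mathbb{R}^{3\times3}$ be symmetric positive-definite matrices with $U\neq V$ and $UV=VU$, and suppose the eigenvalues $\lambda_1,\lambda_2,\lambda_3$ of $U$ are pairwise distinct. Suppose there is a unit vector $\hat e\in\mathbb{R}^3$ such that $V=(-I+2\,\hat e\otimes\hat e)\,U\,(-I+2\,\hat e\otimes\hat e)$. Then $\hat e$ is perpendicular to an eigenvector of $U$. Consequently $U$ and $V$ form compound domains: there is a unit vector $\hat e'$ with $\hat e'\perp\hat e$ such that $V=(-I+2\,\hat e'\otimes\hat e')\,U\,(-I+2\,\hat e'\otimes\hat e')$ as well.
   Context: $-I+2\hat e\otimes\hat e$ is the rotation by $180^\circ$ about the unit vector $\hat e$. Two distinct symmetric positive-definite matrices $U,V$ are said to form compound domains if there exist two non-parallel unit vectors $\hat e_1,\hat e_2$ with $V=(-I+2\hat e_i\otimes\hat e_i)U(-I+2\hat e_i\otimes\hat e_i)$ for $i=1,2$. A known result used in this setting: if $V=(-I+2\hat e_1\otimes\hat e_1)U(-I+2\hat e_1\otimes\hat e_1)\neq U$, then a second such axis $\hat e_2\nparallel\hat e_1$ exists if and only if $\hat e_1$ is perpendicular to an eigenvector of $U$, in which case $\hat e_1,\hat e_2$ and that eigenvector form an orthonormal basis. *)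

(* Defs.v *)
From mathcomp Require Import all_boot all_order all_algebra.
Set Implicit Arguments. Unset Strict Implicit. Unset Printing Implicit Defensive.
Import Order.TTheory GRing.Theory Num.Theory.
Local Open Scope ring_scope.

Definition dotv (R : rcfType) (n : nat) (u v : 'cV[R]_n) : R :=
  \sum_(i < n) u i 0 * v i 0.

Definition unit_vec (R : rcfType) (n : nat) (e : 'cV[R]_n) : Prop :=
  dotv e e = 1.

Definition spd (R : rcfType) (n : nat) (A : 'M[R]_n) : Prop :=
  A^T = A /\ forall x : 'cV[R]_n, x != 0 -> 0 < (x^T *m A *m x) 0 0.

(* -I + 2 e (x) e : rotation by 180 degrees about e (e a unit vector). *)
Definition rot180 (R : rcfType) (n : nat) (e : 'cV[R]_n) : 'M[R]_n :=
  - 1%:M + 2%:R *: (e *m e^T).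

Definition eigenvector (R : rcfType) (n : nat) (A : 'M[R]_n) (v : 'cV[R]_n) : Prop :=
  v != 0 /\ exists lam : R, A *m v = lam *: v.

(* Main.v *)
Require Import Defs.
From mathcomp Require Import all_boot all_order all_algebra ring lra.
Import Order.TTheory GRing.Theory Num.Theory.
Set Implicit Arguments. Unset Strict Implicit. Unset Printing Implicit Defensive.
Local Open Scope ring_scope.

Lemma tr1 (R : rcfType) n (u v : 'cV[R]_n) : u^T *m v = (dotv u v)%:M.
Proof.
apply/matrixP => i j; rewrite (ord1 i) (ord1 j) !mxE /dotv /=.
by rewrite mulr1n; apply: eq_bigr => k _; rewrite mxE.
Qed.

Lemma conj_expand (R : rcfType) n (U : 'M[R]_n) (x : 'cV[R]_n) (k : R) : U^T = U ->
 (- 1%:M + k *: (x *m x^T)) *m U *m (- 1%:M + k *: (x *m x^T)) =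
 U - k *: (x *m (U *m x)^T + (U *m x) *m x^T) + (k^2 * dotv x (U *m x)) *: (x *m x^T).
Proof.
move=> hU.
rewrite trmx_mul hU !mulmxDl !mulmxDr !mulNmx !mulmxN !mul1mx !mulmx1 opprK.
rewrite -!scalemxAl -!scalemxAr !scalerA.
have -> : x *m x^T *m U *m (x *m x^T) = dotv x (U *m x) *: (x *m x^T).
  by rewrite -!mulmxA (mulmxA U x) (mulmxA x^T) tr1 mul_scalar_mx scalemxAr.
rewrite -!mulmxA.
move: (x *m (x^T *m U)) (U *m (x *m x^T)) (x *m x^T) => A B P.
apply/matrixP => i j; rewrite !mxE; ring.
Qed.

Lemma sum3 (R : rcfType) (F : 'I_3 -> R) : \sum_(i < 3) F i = F 0 + F 1 + F 2.
Proof. rewrite !big_ord_recl big_ord0 addr0 addrA.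
have -> : (2 : 'I_3) = lift ord0 (lift ord0 ord0) by apply/val_inj.
have -> : (0 : 'I_3) = ord0 by apply/val_inj.
have -> : (1 : 'I_3) = lift ord0 ord0 by apply/val_inj.
by []. Qed.

Lemma ord3 (i : 'I_3) : i = 0 \/ i = 1 \/ i = 2.
Proof.
case: i => [[|[|[|m]]] Hi]; [left|right;left|right;right|]; try exact/val_inj.
by [].
Qed.

Lemma eq3 (R : rcfType) (x y : 'cV[R]_3) :
  x 0 0 = y 0 0 -> x 1 0 = y 1 0 -> x 2 0 = y 2 0 -> x = y.
Proof.
move=> h0 h1 h2; apply/matrixP => i j; rewrite (ord1 j).
by case: (ord3 i) => [->|[->|->]].
Qed.

Lemma dotv3 (R : rcfType) (u v : 'cV[R]_3) :
  dotv u v = u 0 0 * v 0 0 + u 1 0 * v 1 0 + u 2 0 * v 2 0.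
Proof. by rewrite /dotv sum3. Qed.

Lemma dotvC (R : rcfType) n (u v : 'cV[R]_n) : dotv u v = dotv v u.
Proof. by apply: eq_bigr => i _; rewrite mulrC. Qed.

Lemma dotvDr (R : rcfType) n (u v w : 'cV[R]_n) : dotv u (v + w) = dotv u v + dotv u w.
Proof. by rewrite /dotv -big_split; apply: eq_bigr => i _; rewrite mxE mulrDr. Qed.

Lemma dotvZr (R : rcfType) n (u v : 'cV[R]_n) a : dotv u (a *: v) = a * dotv u v.
Proof. by rewrite /dotv mulr_sumr; apply: eq_bigr => i _; rewrite mxE mulrCA. Qed.

Lemma dotvDl (R : rcfType) n (u v w : 'cV[R]_n) : dotv (v + w) u = dotv v u + dotv w u.
Proof. by rewrite dotvC dotvDr !(dotvC u). Qed.

Lemma dotvZl (R : rcfType) n (u v : 'cV[R]_n) a : dotv (a *: v) u = a * dotv v u.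
Proof. by rewrite dotvC dotvZr dotvC. Qed.

Lemma dotvE (R : rcfType) n (u v : 'cV[R]_n) : dotv u v = (u^T *m v) 0 0.
Proof. by rewrite tr1 mxE eqxx mulr1n. Qed.

Lemma dotvMl (R : rcfType) n (A : 'M[R]_n) (u v : 'cV[R]_n) :
  dotv (A *m u) v = dotv u (A^T *m v).
Proof. by rewrite !dotvE trmx_mul mulmxA. Qed.

Definition cross (R : rcfType) (u w : 'cV[R]_3) : 'cV[R]_3 :=
  \col_i (if i == 0 :> 'I_3 then u 1 0 * w 2 0 - u 2 0 * w 1 0
          else if i == 1 :> 'I_3 then u 2 0 * w 0 0 - u 0 0 * w 2 0
          else u 0 0 * w 1 0 - u 1 0 * w 0 0).

Lemma cross0 (R : rcfType) (u w : 'cV[R]_3) : cross u w 0 0 = u 1 0 * w 2 0 - u 2 0 * w 1 0.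
Proof. by rewrite mxE. Qed.
Lemma cross1 (R : rcfType) (u w : 'cV[R]_3) : cross u w 1 0 = u 2 0 * w 0 0 - u 0 0 * w 2 0.
Proof. by rewrite mxE. Qed.
Lemma cross2 (R : rcfType) (u w : 'cV[R]_3) : cross u w 2 0 = u 0 0 * w 1 0 - u 1 0 * w 0 0.
Proof. by rewrite mxE. Qed.

Lemma bac (R : rcfType) (e f x : 'cV[R]_3) :
  dotv (cross e f) (cross e f) *: x - dotv (cross e f) x *: cross e f =
  dotv x f *: cross (cross e f) e - dotv x e *: cross (cross e f) f.
Proof.
apply: eq3; rewrite !mxE !dotv3 !cross0 !cross1 !cross2 /=; ring.
Qed.

Lemma lagrange (R : rcfType) (e f : 'cV[R]_3) :
  dotv (cross e f) (cross e f) = dotv e e * dotv f f - dotv e f ^+ 2.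
Proof. rewrite !dotv3 !cross0 !cross1 !cross2; ring. Qed.

Lemma cross_orthl (R : rcfType) (e f : 'cV[R]_3) : dotv e (cross e f) = 0.
Proof. rewrite !dotv3 !cross0 !cross1 !cross2; ring. Qed.
Lemma cross_orthr (R : rcfType) (e f : 'cV[R]_3) : dotv f (cross e f) = 0.
Proof. rewrite !dotv3 !cross0 !cross1 !cross2; ring. Qed.

Lemma dotv_pos (R : rcfType) (f : 'cV[R]_3) : f != 0 -> 0 < dotv f f.
Proof.
move=> hf; rewrite lt_def; apply/andP; split; last first.
  rewrite dotv3; nra.
apply: contra hf; rewrite dotv3 => /eqP h.
have h0 : f 0 0 = 0.
  by apply/eqP; rewrite -sqrf_eq0 eq_le sqr_ge0 andbT; nra.
have h1 : f 1 0 = 0.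
  by apply/eqP; rewrite -sqrf_eq0 eq_le sqr_ge0 andbT; nra.
have h2 : f 2 0 = 0.
  by apply/eqP; rewrite -sqrf_eq0 eq_le sqr_ge0 andbT; nra.
by apply/eqP; apply: eq3; rewrite mxE.
Qed.

Theorem mainTheorem1 (R : rcfType) (U V : 'M[R]_3) (e : 'cV[R]_3) :
  spd U -> spd V -> U != V -> U *m V = V *m U ->
  (exists l1 l2 l3 : R,
      [/\ l1 != l2, l1 != l3, l2 != l3 &
          char_poly U = ('X - l1%:P) * ('X - l2%:P) * ('X - l3%:P)]) ->
  unit_vec e ->
  V = rot180 e *m U *m rot180 e ->
  (exists v : 'cV[R]_3, eigenvector U v /\ dotv e v = 0) /\
  (exists e' : 'cV[R]_3,
      [/\ unit_vec e', dotv e' e = 0 & V = rot180 e' *m U *m rot180 e']).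
Proof.
move=> [hU _] _ hUV hcomm _ he hV.
rewrite /unit_vec in he.
pose a := dotv e (U *m e).
have [f hf] : exists f, f = U *m e - a *: e by eexists.
have hUe : U *m e = f + a *: e by rewrite hf subrK.
have hef : dotv e f = 0.
  by rewrite hf dotvDr -scaleN1r !dotvZr he -/a; ring.
have hfe : dotv f e = 0 by rewrite dotvC.
have hV2 : V = U - 2%:R *: (e *m f^T + f *m e^T).
  rewrite hV /rot180 conj_expand // hUe dotvDr dotvZr he hef.
  rewrite !linearD !linearZ /= mulmxDl -scalemxAl.
  move: (e *m f^T) (f *m e^T) (e *m e^T) => A B P.
  apply/matrixP => i j; rewrite !mxE; ring.
have hf0 : f != 0.
  apply: contra hUV => /eqP f0.
  by rewrite hV2 f0 trmx0 mulmx0 mul0mx addr0 scaler0 subr0.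
have hM : U *m (e *m f^T + f *m e^T) = (e *m f^T + f *m e^T) *m U.
  move: hcomm; rewrite hV2 mulmxBr mulmxBl -scalemxAr -scalemxAl.
  move/addrI/oppr_inj/(scalerI _); apply.
  by rewrite pnatr_eq0.
have hfU : f^T *m U = (U *m f)^T by rewrite trmx_mul hU.
have heU : e^T *m U = (f + a *: e)^T by rewrite -hUe trmx_mul hU.
move: hM; rewrite mulmxDr mulmxDl !mulmxA hUe -(mulmxA e) -(mulmxA f) hfU heU.
have [g hg] : exists g, g = U *m f by eexists.
rewrite -hg => /matrixP hM.
pose c := dotv e g.
have key : forall i, g i 0 = a * f i 0 + c * e i 0.
  move=> i.
  have hj : forall j, g i 0 * e j 0 = e i 0 * g j 0 + a * f i 0 * e j 0 - a * e i 0 * f j 0.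
    move=> j; have := hM i j; rewrite !mxE !big_ord1 !mxE => h; lra.
  transitivity (g i 0 * dotv e e); first by rewrite he mulr1.
  rewrite /dotv mulr_sumr (eq_bigr (fun j => e i 0 * (e j 0 * g j 0) + a * f i 0 * (e j 0 * e j 0) - a * e i 0 * (e j 0 * f j 0))); last first.
    by move=> j _; rewrite mulrA hj; ring.
  rewrite sumrB big_split /= -!mulr_sumr.
  have he' : \sum_(j < 3) e j 0 * e j 0 = 1 := he.
  have hef' : \sum_(j < 3) e j 0 * f j 0 = 0 := hef.
  rewrite he' hef' /c /dotv; ring.
have hUf : U *m f = a *: f + c *: e.
  by rewrite -hg; apply/matrixP => i j; rewrite (ord1 j) !mxE key.
pose n := dotv f f.
have hc : c = n.
  by rewrite /c hg dotvC dotvMl hU hUe dotvDr dotvZr hfe mulr0 addr0.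
have hn : 0 < n := dotv_pos hf0.
split.
  exists (cross e f); split; last exact: cross_orthl.
  have hvv : dotv (cross e f) (cross e f) = n.
    by rewrite lagrange he hef mul1r expr2 mulr0 subr0.
  split.
    apply/eqP => v0; move: hn; rewrite -hvv v0 dotv3 !mxE mulr0 !addr0 ltxx //.
  exists (dotv (cross e f) (U *m cross e f) / n).
  have hxe : dotv (U *m cross e f) e = 0.
    by rewrite dotvMl hU hUe dotvDr dotvZr (dotvC _ f) cross_orthr (dotvC _ e) cross_orthl mulr0 addr0.
  have hxf : dotv (U *m cross e f) f = 0.
    by rewrite dotvMl hU hUf dotvDr !dotvZr (dotvC _ f) cross_orthr (dotvC _ e) cross_orthl !mulr0 addr0.
  have := bac e f (U *m cross e f); rewrite hxe hxf !scale0r subr0 hvv => /eqP; rewrite subr_eq0 => /eqP h.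
  apply: (scalerI (lt0r_neq0 hn)); rewrite h scalerA mulrCA mulfV ?mulr1 //.
  exact: lt0r_neq0.
have hs2 : Num.sqrt n ^+ 2 = n by rewrite sqr_sqrtr // ltW.
have hs0 : Num.sqrt n != 0.
  apply/eqP => s0; move: hs2; rewrite s0 expr2 mulr0 => n0.
  by move: hn; rewrite -n0 ltxx.
move: hs2 hs0 hUf hc hn; rewrite /n; move: (Num.sqrt (dotv f f)) => s hs2 hs0 hUf hc hn.
exists (s^-1 *: f); split.
- rewrite /unit_vec dotvZl dotvZr -hs2; field; exact: hs0.
- by rewrite dotvZl hfe mulr0.
have ht : (s^-1 *: f)^T = s^-1 *: f^T by rewrite linearZ.
rewrite hV2 /rot180 ht -scalemxAl -scalemxAr !scalerA.
rewrite conj_expand // hUf dotvDr !dotvZr hfe.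
rewrite !linearD !linearZ /= !mulmxDl -!scalemxAl hc -hs2.
move: (e *m f^T) (f *m e^T) (f *m f^T) (e *m e^T) => A B P Q.
apply/matrixP => i j; rewrite !mxE; field; exact: hs0.
Qed.
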